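(* If a state over time function $\star$ satisfies axiom (E), then it is state-linear, i.e. linear in its second argument.
   Context: Systems are finite-dimensional Hilbert spaces; $\mathfrak{B}(A)$ linear operators, $\mathfrak{S}(A)$ density operators, $\mathfrak{C}(A,B)$ quantum channels (CPTP maps $\mathfrak{B}(A)\to\mathfrak{B}(B)$). A state over time function assigns to all systems $A,B$ a map $\star:\mathfrak{C}(A,B)\times\mathfrak{S}(A)\to\mathfrak{B}(A\otimes B)$, $(\mathcal{E},\rho)\mapsto\mathcal{E}_{B|A}\star\rho_A$, with $\mathrm{Tr}_A[\mathcal{E}\star\rho]=\mathcal{E}(\rho)$ and $\mathrm{Tr}_B[\mathcal{E}\star\rho]=\rho$, extended homogeneously by $(\lambda\mathcal{E})\star\rho=\mathcal{E}\star(\lambda\rho)=\lambda(\mathcal{E}\star\rho)$, $\lambda\in\mathbb{C}$. It is state-linear if it is linear in the second argument. A quantum state over spacetime on $A\otimes E$ is either a density operator on $A\otimes E$ or an operator of the form $\mathcal{F}\star\sigma$. Axiom (E): for all systems $A,B,E$, every quantum state over spacetime $\rho_{AE}$ and every channel $\mathcal{E}_{B|A}$, an operator $\mathcal{E}_{B|A}\star\rho_{AE}$ on $A\otimes B\otimes E$ is defined such that for every completely positive trace-non-increasing map $\mathcal{I}_E$ on $E$, $\mathcal{I}_E[\mathcal{E}_{B|A}\star\rho_{AE}]=\mathcal{E}_{B|A}\star\mathcal{I}_E(\rho_{AE})$, and $\mathrm{Tr}_A[\mathcal{E}_{B|A}\star\rho_{AE}]=(\mathcal{E}_{B|A}\otimes\mathrm{id}_E)(\rho_{AE})$.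 *)

(* Defs.v *)
From HB Require Import structures.
From mathcomp Require Import all_boot all_order all_algebra.
From mathcomp Require Import complex mxtens.
From mathcomp Require Import reals.

Set Implicit Arguments.
Unset Strict Implicit.
Unset Printing Implicit Defensive.

Import Order.TTheory GRing.Theory Num.Theory.
Local Open Scope ring_scope.

Section QInfo.
Variable C : numClosedFieldType.

(* A system is a finite-dimensional Hilbert space C^n, represented by n;
   the composite system A (x) B is C^(n*m), with the index (i,j) of the
   tensor product encoded by mxtens_index (Kronecker convention). *)

Definition adjmx {n m : nat} (A : 'M[C]_(n, m)) : 'M[C]_(m, n) :=
  \matrix_(i, j) (A j i)^*.

Definition psd {n : nat} (A : 'M[C]_n) : Prop :=
  adjmx A = A /\ forall v : 'cV[C]_n, 0 <= (adjmx v *m A *m v) 0 0.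

Definition density {n : nat} (rho : 'M[C]_n) : Prop := psd rho /\ \tr rho = 1.

Definition is_linear {n m : nat} (f : 'M[C]_n -> 'M[C]_m) : Prop :=
  forall (a : C) (u v : 'M[C]_n), f (a *: u + v) = a *: f u + f v.

(* id_k (x) f acting on B(C^k (x) C^n) *)
Definition idtens {k n m : nat} (f : 'M[C]_n -> 'M[C]_m) (X : 'M[C]_(k * n))
  : 'M[C]_(k * m) :=
  \matrix_(ij, kl)
    f (\matrix_(a, b) X (mxtens_index ((mxtens_unindex ij).1, a))
                        (mxtens_index ((mxtens_unindex kl).1, b)))
      (mxtens_unindex ij).2 (mxtens_unindex kl).2.

(* f (x) id_k acting on B(C^n (x) C^k) *)
Definition tensid {n m k : nat} (f : 'M[C]_n -> 'M[C]_m) (X : 'M[C]_(n * k))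
  : 'M[C]_(m * k) :=
  \matrix_(ij, kl)
    f (\matrix_(a, b) X (mxtens_index (a, (mxtens_unindex ij).2))
                        (mxtens_index (b, (mxtens_unindex kl).2)))
      (mxtens_unindex ij).1 (mxtens_unindex kl).1.

Definition completely_positive {n m : nat} (f : 'M[C]_n -> 'M[C]_m) : Prop :=
  forall (k : nat) (X : 'M[C]_(k * n)), psd X -> psd (idtens f X).

Definition channel {n m : nat} (f : 'M[C]_n -> 'M[C]_m) : Prop :=
  [/\ is_linear f, completely_positive f & forall X, \tr (f X) = \tr X].

Definition cp_tni {n m : nat} (f : 'M[C]_n -> 'M[C]_m) : Prop :=
  [/\ is_linear f, completely_positive f &
      forall X, psd X -> \tr (f X) <= \tr X].

Definition ptrace1 {n m : nat} (X : 'M[C]_(n * m)) : 'M[C]_m :=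
  \matrix_(j, l) \sum_(i < n) X (mxtens_index (i, j)) (mxtens_index (i, l)).
Definition ptrace2 {n m : nat} (X : 'M[C]_(n * m)) : 'M[C]_n :=
  \matrix_(i, k) \sum_(j < m) X (mxtens_index (i, j)) (mxtens_index (k, j)).

(* trace over the first factor A of B(A (x) B (x) E) = B(C^((n*m)*k)) *)
Definition ptrace1_3 {n m k : nat} (X : 'M[C]_((n * m) * k)) : 'M[C]_(m * k) :=
  \matrix_(jl, jl')
    \sum_(i < n)
      X (mxtens_index (mxtens_index (i, (mxtens_unindex jl).1), (mxtens_unindex jl).2))
        (mxtens_index (mxtens_index (i, (mxtens_unindex jl').1), (mxtens_unindex jl').2)).

(* A (state over time) candidate: for all systems A = C^n, B = C^m, a map
   (E, rho) |-> E \star rho in B(A (x) B).  Only its values on channels and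
   density operators matter. *)
Definition star_type : Type :=
  forall n m : nat, ('M[C]_n -> 'M[C]_m) -> 'M[C]_n -> 'M[C]_(n * m).

Definition state_over_time_function (star : star_type) : Prop :=
  forall (n m : nat) (E : 'M[C]_n -> 'M[C]_m) (rho : 'M[C]_n),
    channel E -> density rho ->
    ptrace1 (star n m E rho) = E rho /\ ptrace2 (star n m E rho) = rho.

Definition spacetime_state (star : star_type) {n k : nat} (rho : 'M[C]_(n * k))
  : Prop :=
  density rho \/
  exists (F : 'M[C]_n -> 'M[C]_k) (sigma : 'M[C]_n),
    [/\ channel F, density sigma & rho = star n k F sigma].

Definition to_triv {n : nat} (X : 'M[C]_n) : 'M[C]_(n * 1) :=
  castmx (esym (muln1 n), esym (muln1 n)) X.

(* Axiom (E): the state over time function extends to an operation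
   ext n m k E rho_AE in B(A (x) B (x) E) on quantum states over spacetime
   rho_AE on A (x) E (extended homogeneously), which agrees with \star when E
   is the trivial system, commutes with every CP trace-non-increasing map on E,
   and has the correct marginal after tracing out A. *)
Definition axiom_E (star : star_type) : Prop :=
  exists ext : forall n m k : nat,
      ('M[C]_n -> 'M[C]_m) -> 'M[C]_(n * k) -> 'M[C]_((n * m) * k),
    forall (n m : nat) (E : 'M[C]_n -> 'M[C]_m), channel E ->
      [/\
          forall rho : 'M[C]_n, density rho ->
            ext n m 1%N E (to_triv rho) = to_triv (star n m E rho),
          forall (k : nat) (rho : 'M[C]_(n * k)) (a : C),
            spacetime_state star rho ->
            ext n m k E (a *: rho) = a *: ext n m k E rho,
          forall (k k' : nat) (rho : 'M[C]_(n * k)) (I : 'M[C]_k -> 'M[C]_k'),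
            spacetime_state star rho -> cp_tni I ->
            idtens I (ext n m k E rho) = ext n m k' E (idtens I rho)
        &
          forall (k : nat) (rho : 'M[C]_(n * k)),
            spacetime_state star rho ->
            ptrace1_3 (ext n m k E rho) = tensid E rho].

Definition state_linear (star : star_type) : Prop :=
  forall (n m : nat) (E : 'M[C]_n -> 'M[C]_m), channel E ->
    exists L : 'M[C]_n -> 'M[C]_(n * m),
      is_linear L /\ forall rho : 'M[C]_n, density rho -> L rho = star n m E rho.

End QInfo.

(* Main.v *)
Require Import Defs.
From mathcomp Require Import all_boot all_order all_algebra.
From mathcomp Require Import complex mxtens reals.
From mathcomp Require Import sesquilinear spectral ring.

Set Implicit Arguments.
Unset Strict Implicit.
Unset Printing Implicit Defensive.
Import Order.TTheory GRing.Theory Num.Theory.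
Local Open Scope ring_scope.

Section Helpers.
Variable C : numClosedFieldType.

Lemma sum_tens m n (F : 'I_(m * n) -> C) :
  \sum_x F x = \sum_(i < m) \sum_(j < n) F (mxtens_index (i, j)).
Proof.
rewrite pair_big /= (reindex (@mxtens_index m n)) /=.
  by apply: eq_bigr => -[i j].
by exists (@mxtens_unindex m n) => x _; rewrite (mxtens_indexK, mxtens_unindexK).
Qed.

Lemma sum_delta n (p : 'I_n) (F : 'I_n -> C) :
  \sum_(i < n) (i == p)%:R * F i = F p.
Proof.
rewrite (bigD1 p) //= eqxx mul1r big1 ?addr0 // => i /negPf ->.
by rewrite mul0r.
Qed.

Lemma adjmx_mul m n p (A : 'M[C]_(m, n)) (B : 'M[C]_(n, p)) :
  adjmx (A *m B) = adjmx B *m adjmx A.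
Proof.
apply/matrixP => i j; rewrite !mxE rmorph_sum; apply: eq_bigr => k _.
by rewrite !mxE rmorphM mulrC.
Qed.

Lemma adjmxK m n (A : 'M[C]_(m, n)) : adjmx (adjmx A) = A.
Proof. by apply/matrixP => i j; rewrite !mxE conjCK. Qed.

Lemma adjmxD m n (A B : 'M[C]_(m, n)) : adjmx (A + B) = adjmx A + adjmx B.
Proof. by apply/matrixP => i j; rewrite !mxE rmorphD. Qed.

Lemma adjmxZ m n a (A : 'M[C]_(m, n)) : adjmx (a *: A) = a^* *: adjmx A.
Proof. by apply/matrixP => i j; rewrite !mxE rmorphM. Qed.

Lemma adjmx0 m n : adjmx (0 : 'M[C]_(m, n)) = 0.
Proof. by apply/matrixP => i j; rewrite !mxE rmorph0. Qed.

Lemma psd_congr p q (X : 'M[C]_p) (B : 'M[C]_(p, q)) :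
  psd X -> psd (adjmx B *m X *m B).
Proof.
move=> [hX pX]; split.
  by rewrite !adjmx_mul adjmxK hX mulmxA.
move=> v; have := pX (B *m v).
by rewrite adjmx_mul !mulmxA.
Qed.

Lemma psd0 p : psd (0 : 'M[C]_p).
Proof. by split; [rewrite adjmx0 | move=> v; rewrite mulmx0 mul0mx mxE]. Qed.

Lemma psdD p (X Y : 'M[C]_p) : psd X -> psd Y -> psd (X + Y).
Proof.
move=> [hX pX] [hY pY]; split; first by rewrite adjmxD hX hY.
by move=> v; rewrite mulmxDr mulmxDl mxE addr_ge0.
Qed.

Lemma psdZ p a (X : 'M[C]_p) : 0 <= a -> psd X -> psd (a *: X).
Proof.
move=> a0 [hX pX]; split; first by rewrite adjmxZ geC0_conj // hX.
by move=> v; rewrite -scalemxAr -scalemxAl mxE mulr_ge0.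
Qed.

Lemma psd_sum p N (c : 'I_N -> C) (X : 'I_N -> 'M[C]_p) :
  (forall l, 0 <= c l) -> (forall l, psd (X l)) -> psd (\sum_l c l *: X l).
Proof.
move=> c0 Xp; apply: (big_ind (fun M => psd M)).
- exact: psd0.
- exact: psdD.
- by move=> l _; apply: psdZ.
Qed.

Lemma psd1 p : psd (1%:M : 'M[C]_p).
Proof.
split; first by apply/matrixP => i j; rewrite !mxE rmorphMn rmorph1 eq_sym.
move=> v; rewrite mulmx1 mxE; apply: sumr_ge0 => i _.
by rewrite mxE mulrC mul_conjC_ge0.
Qed.


Lemma idtens_ext k n m (f g : 'M[C]_n -> 'M[C]_m) (Z : 'M[C]_(k * n)) :
  f =1 g -> idtens f Z = idtens g Z.
Proof. by move=> fg; apply/matrixP => i j; rewrite !mxE fg. Qed.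

Lemma idtens_lin k n m a (f g : 'M[C]_n -> 'M[C]_m) (Z : 'M[C]_(k * n)) :
  idtens (fun X => a *: f X + g X) Z = a *: idtens f Z + idtens g Z.
Proof. by apply/matrixP => i j; rewrite !mxE. Qed.

Lemma idtens_sum k n m N (c : 'I_N -> C) (f : 'I_N -> 'M[C]_n -> 'M[C]_m)
  (Z : 'M[C]_(k * n)) :
  idtens (fun X => \sum_l c l *: f l X) Z = \sum_l c l *: idtens (f l) Z.
Proof.
apply/matrixP => i j; rewrite !mxE !summxE; apply: eq_bigr => l _.
by rewrite !mxE.
Qed.

Definition Bu k n (u : 'cV[C]_n) : 'M[C]_(k * n, k * 1) :=
  \matrix_(x, y) (((mxtens_unindex x).1 == (mxtens_unindex y).1)%:R
                  * u (mxtens_unindex x).2 0).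

Lemma idtens_J k n (u : 'cV[C]_n) (Z : 'M[C]_(k * n)) :
  idtens (fun X => adjmx u *m X *m u) Z = adjmx (Bu k u) *m Z *m Bu k u.
Proof.
apply/matrixP => p q; rewrite !mxE.
rewrite (ord1 (mxtens_unindex p).2) (ord1 (mxtens_unindex q).2).
rewrite sum_tens; symmetry.
under eq_bigr => i _ do (under eq_bigr => j _ do
  rewrite [Bu k u _ _]mxE mxtens_indexK /= mulrCA).
under eq_bigr => i _ do rewrite -mulr_sumr.
rewrite sum_delta; apply: eq_bigr => j _; congr (_ * _).
rewrite !mxE sum_tens.
under eq_bigr => i _ do (under eq_bigr => a _ do
  rewrite [adjmx _ _ _]mxE [Bu k u _ _]mxE mxtens_indexK /= rmorphM rmorph_nat -mulrA).
under eq_bigr => i _ do rewrite -mulr_sumr.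
rewrite sum_delta; apply: eq_bigr => a _; rewrite !mxE.
by [].
Qed.

Lemma sum_delta1 n (p : 'I_n) : \sum_(i < n) ((i == p)%:R : C) = 1.
Proof.
have := sum_delta p (fun _ => (1 : C)).
by under eq_bigr => i _ do rewrite mulr1.
Qed.

Definition vmax n : 'cV[C]_(n * n) :=
  \matrix_(x, _) ((mxtens_unindex x).1 == (mxtens_unindex x).2)%:R.

Definition Phi n : 'M[C]_(n * n) := (n%:R)^-1 *: (vmax n *m adjmx (vmax n)).

Lemma Phi_E n i a j b :
  Phi n (mxtens_index (i, a)) (mxtens_index (j, b))
  = (n%:R)^-1 * ((a == i)%:R * (b == j)%:R).
Proof.
rewrite !mxE big_ord1 !mxE !mxtens_indexK /= rmorph_nat.
by rewrite (eq_sym a) (eq_sym b).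
Qed.

Lemma Phi_density n : (0 < n)%N -> density (Phi n).
Proof.
move=> n0; split.
  apply: psdZ; first by rewrite invr_ge0 ler0n.
  have -> : vmax n *m adjmx (vmax n)
    = adjmx (adjmx (vmax n)) *m 1%:M *m adjmx (vmax n).
    by rewrite adjmxK mulmx1.
  by apply: psd_congr; apply: psd1.
rewrite mxtraceZ /mxtrace.
under eq_bigr => x _ do rewrite mxE big_ord1 !mxE rmorph_nat -natrM mulnb andbb.
rewrite sum_tens.
under eq_bigr => i _ do (under eq_bigr => a _ do rewrite mxtens_indexK /= eq_sym; rewrite sum_delta1).
by rewrite sumr_const card_ord mulVf // pnatr_eq0 -lt0n.
Qed.


Definition Tm n (s : 'M[C]_n) (X : 'M[C]_n) : 'M[C]_1 :=
  (\sum_a \sum_b s a b * X a b)%:M.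

Lemma Tm_linX n (s : 'M[C]_n) : is_linear (Tm s).
Proof.
move=> a u v; rewrite /Tm scale_scalar_mx -raddfD /=; congr (_%:M).
rewrite mulr_sumr -big_split; apply: eq_bigr => i _ /=.
rewrite mulr_sumr -big_split; apply: eq_bigr => j _ /=.
by rewrite !mxE mulrDr mulrCA.
Qed.

Lemma Tm_lins n a (s t : 'M[C]_n) X : Tm (a *: s + t) X = a *: Tm s X + Tm t X.
Proof.
rewrite /Tm scale_scalar_mx -raddfD /=; congr (_%:M).
rewrite mulr_sumr -big_split; apply: eq_bigr => i _ /=.
rewrite mulr_sumr -big_split; apply: eq_bigr => j _ /=.
by rewrite !mxE mulrDl mulrA.
Qed.

Lemma idtens_Tm_Phi n (s : 'M[C]_n) :
  idtens (k := n) (Tm s) (Phi n) = (n%:R)^-1 *: to_triv s.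
Proof.
apply/matrixP => p q.
rewrite !mxE (ord1 (mxtens_unindex p).2) (ord1 (mxtens_unindex q).2) eqxx mulr1n.
under eq_bigr => a _ do (under eq_bigr => b _ do rewrite mxE Phi_E mulrCA (mulrCA (s a b)) [s a b * _]mulrC).
under eq_bigr => a _ do rewrite -mulr_sumr.
rewrite -mulr_sumr; congr (_ * _).
under eq_bigr => a _ do rewrite -mulr_sumr sum_delta.
rewrite sum_delta /to_triv castmxE; congr (s _ _); apply: val_inj => /=;
  by rewrite divn1.
Qed.


Local Open Scope sesquilinear_scope.

Lemma tstar_adj m n (A : 'M[C]_(m, n)) : A ^t* = adjmx A.
Proof. by apply/matrixP => i j; rewrite !mxE. Qed.

Lemma spec_decomp n (s : 'M[C]_n) : adjmx s = s ->
  s = adjmx (spectralmx s) *m diag_mx (spectral_diag s) *m spectralmx s.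
Proof.
move=> hs; have : s \is normalmx.
  by apply/normalmxP; rewrite tstar_adj hs.
move/orthomx_spectralP => {1}->.
by rewrite invmx_unitary ?spectral_unitarymx // tstar_adj.
Qed.

Lemma Tm_cp_tni n (s : 'M[C]_n) : density s -> cp_tni (Tm s).
Proof.
move=> [[hs ps] trs].
set P := spectralmx s; set d := spectral_diag s.
have PU : P *m adjmx P = 1%:M.
  by rewrite -tstar_adj; apply/unitarymxP; apply: spectral_unitarymx.
have UP : adjmx P *m P = 1%:M by apply: mulmx1C.
have sD : s = adjmx P *m diag_mx d *m P by apply: spec_decomp.
have DE : diag_mx d = P *m s *m adjmx P.
  by rewrite {1}sD !mulmxA PU mul1mx -mulmxA PU mulmx1.
have d0 : forall l, 0 <= d 0 l.
  move=> l; have -> : d 0 l = diag_mx d l l by rewrite mxE eqxx mulr1n.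
  suff -> : (diag_mx d) l l
    = (adjmx (adjmx (row l P)) *m s *m adjmx (row l P)) 0 0 by apply: ps.
  rewrite DE adjmxK -row_mul [RHS]mxE [LHS]mxE; apply: eq_bigr => j _.
  by rewrite !mxE.
have dsum : \sum_l d 0 l = 1.
  rewrite -trs [in RHS]sD mxtrace_mulC mulmxA PU mul1mx mxtrace_diag.
  by [].
have d1 : forall l, d 0 l <= 1.
  move=> l; rewrite -dsum (bigD1 l) //= lerDl; apply: sumr_ge0 => *; exact: d0.
pose u l := (row l P)^T.
have uE : forall l a, u l a 0 = P l a by move=> l a; rewrite !mxE.
have TE : forall X, Tm s X = \sum_l d 0 l *: (adjmx (u l) *m X *m u l).
  move=> X; apply/matrixP => i j; rewrite (ord1 i) (ord1 j) summxE !mxE eqxx mulr1n.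
  under eq_bigr => a _ do (under eq_bigr => b _ do
    rewrite [in s a b]sD mxE mulr_suml).
  under eq_bigr => a _ do rewrite exchange_big /=.
  rewrite exchange_big /=; apply: eq_bigr => l _.
  rewrite !mxE mulr_sumr exchange_big /=; apply: eq_bigr => b _.
  rewrite !mxE mulr_suml mulr_sumr; apply: eq_bigr => a _.
  rewrite mul_mx_diag !mxE; ring.
split; first exact: Tm_linX.
  move=> k Z pZ; rewrite (idtens_ext _ TE) idtens_sum; apply: psd_sum => // l.
  by rewrite idtens_J; apply: psd_congr.
move=> X [hX pX]; rewrite TE /mxtrace big_ord1 summxE.
apply: (@le_trans _ _ (\sum_l (adjmx (u l) *m X *m u l) 0 0)).
  by apply: ler_sum => l _; rewrite mxE ler_piMl.
have UPE : forall a b, \sum_l (P l a)^* * P l b = (a == b)%:R.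
  move=> a b; have := congr1 (fun M : 'M[C]_n => M a b) UP; rewrite /= !mxE => <-.
  by apply: eq_bigr => l _; rewrite !mxE.
under eq_bigr => l _ do (rewrite mxE; under eq_bigr => b _ do rewrite mxE mulr_suml).
rewrite le_eqVlt; apply/orP; left; apply/eqP.
rewrite exchange_big /=; apply: eq_bigr => b _.
rewrite exchange_big /=.
under eq_bigr => a _ do (under eq_bigr => l _ do rewrite !mxE mulrAC;
  rewrite -mulr_suml UPE).
by rewrite sum_delta.
Qed.
Lemma density_cast n p (e : n = p) (X : 'M[C]_n) :
  density X -> density (castmx (e, e) X).
Proof. by case: p / e; rewrite castmx_id. Qed.

Lemma density_pos n (s : 'M[C]_n) : density s -> (0 < n)%N.
Proof.
case: n s => [|n] s [_] //; rewrite /mxtrace big_ord0 => /eqP.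
by rewrite eq_sym oner_eq0.
Qed.

Lemma castmx_lin m n m' n' (e : (m = m') * (n = n')) a (A B : 'M[C]_(m, n)) :
  castmx e (a *: A + B) = a *: castmx e A + castmx e B.
Proof. by apply/matrixP => i j; rewrite !(castmxE, mxE). Qed.

Lemma castmx_scale m n m' n' (e : (m = m') * (n = n')) a (A : 'M[C]_(m, n)) :
  castmx e (a *: A) = a *: castmx e A.
Proof. by apply/matrixP => i j; rewrite !(castmxE, mxE). Qed.

End Helpers.

Theorem proposition1 (R : realType) (star : star_type R[i]) :
  state_over_time_function star -> axiom_E star -> state_linear star.
Proof.
move=> _ [ext hext] n m E chE.
have [h1 h2 h3 h4] := hext n m E chE.
pose Y := ext n m n E (Phi _ n).
exists (fun s => n%:R *: castmx (muln1 (n * m), muln1 (n * m))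
                   (idtens (k := n * m) (Tm s) Y)).
split.
  move=> a s t; rewrite (idtens_ext _ (Tm_lins a s t)) idtens_lin castmx_lin.
  by rewrite scalerDr !scalerA (mulrC a).
move=> s ds; have n0 := density_pos ds.
rewrite /Y h3; last exact: Tm_cp_tni.
  rewrite idtens_Tm_Phi h2; last by left; apply: density_cast.
  rewrite h1 // castmx_scale /to_triv castmxKV scalerA mulfV ?scale1r //.
  by rewrite pnatr_eq0 -lt0n.
by left; apply: Phi_density.
Qed.
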